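(* Let $G=\langle V,E\rangle$ be a DAG and let $\pi$ be an $\mathcal{H}^{(\ast)}$-partition of $G$. Then there exists a topological sorting $\varrho$ of $G$ such that $|\pi^{E}_\varrho|\le|\pi|$.
   Context: A DAG is a finite directed acyclic graph. For $V_1\subseteq V$, $G[V_1]$ is the induced subgraph. A partition $\pi=\{V_1,\dots,V_k\}$ of $V$ is an $\mathcal{H}^k$-partition if each $G[V_i]$ has a directed Hamiltonian path. The quotient digraph $G/\pi$ has vertex set $\pi$ and an arc $\langle V_i,V_j\rangle$ ($i\ne j$) whenever some arc of $E$ goes from a vertex of $V_i$ to a vertex of $V_j$. An $\mathcal{H}^{(\ast)}$-partition is an $\mathcal{H}^k$-partition (for some positive integer $k$) for which $G/\pi$ is acyclic. A topological sorting of $G$ is a bijection $\tau:V\to\{1,\dots,|V|\}$ with $\tau(u)<\tau(v)$ for every $\langle u,v\rangle\in E$. A path $\langle u_1,\dots,u_n\rangle$ ($n\ge1$) of $G$ is a $\tau,E$-path if $\tau(u_{i+1})=\tau(u_i)+1$ for all $i<n$; it is maximal if its vertex set is not contained in the vertex set of any other $\tau,E$-path. $\pi^{E}_\tau$ denotes the set of vertex sets of maximal $\tau,E$-paths. *)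

(* Defs.v *)
From mathcomp Require Import all_boot.
Set Implicit Arguments. Unset Strict Implicit. Unset Printing Implicit Defensive.

Definition acyclic (T : finType) (E : rel T) : Prop :=
  forall (x : T) (p : seq T), path E x p -> last x p = x -> p = [::].

(* G[A] has a directed Hamiltonian path: a duplicate-free sequence covering
   exactly A whose consecutive elements are arcs (all arcs lie within A). *)
Definition has_ham_path (V : finType) (E : rel V) (A : {set V}) : Prop :=
  exists s : seq V, [/\ uniq s, [set x in s] = A & sorted E s].

Definition quot_rel (V : finType) (E : rel V) (pi : {set {set V}}) : rel {set V} :=
  fun X Y => [&& X \in pi, Y \in pi, X != Y &
              [exists x in X, exists y in Y, E x y]].

(* H^k-partition for k = #|pi| >= 1, with acyclic quotient. *)
Definition Hstar_partition (V : finType) (E : rel V) (pi : {set {set V}}) : Prop :=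
  [/\ partition pi [set: V], 0 < #|pi|,
      (forall X, X \in pi -> has_ham_path E X) &
      acyclic (quot_rel E pi)].

(* Topological sorting (0-based values 0..|V|-1 instead of 1..|V|). *)
Definition topo_sort (V : finType) (E : rel V) (tau : V -> 'I_#|V|) : Prop :=
  bijective tau /\ (forall u v, E u v -> tau u < tau v).

Definition tauE_path (V : finType) (E : rel V) (tau : V -> 'I_#|V|) (s : seq V) : Prop :=
  s != [::] /\ sorted (fun u v => E u v && (nat_of_ord (tau v) == (tau u).+1)) s.

Definition maximal_tauE_path (V : finType) (E : rel V) (tau : V -> 'I_#|V|)
  (s : seq V) : Prop :=
  tauE_path E tau s /\
  forall t, tauE_path E tau t -> [set x in s] \subset [set x in t] ->
            [set x in s] = [set x in t].

Definition in_pi_tauE (V : finType) (E : rel V) (tau : V -> 'I_#|V|) (A : {set V}) : Prop :=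
  exists s, maximal_tauE_path E tau s /\ A = [set x in s].

(* Main.v *)
Require Import Defs.
From mathcomp Require Import all_boot.
From Stdlib Require Import Classical ClassicalEpsilon.
Set Implicit Arguments. Unset Strict Implicit. Unset Printing Implicit Defensive.

Lemma acyc_conn (T : finType) (R : rel T) x y :
  acyclic R -> connect R y x -> R x y -> False.
Proof.
move=> Hac /connectP [p Hp Hl] Rxy.
have := Hac x (y :: p). rewrite /= Rxy Hp /= -Hl => /(_ erefl erefl); done.
Qed.

Lemma sink_ex (T : finType) (R : rel T) (A : {set T}) x0 :
  acyclic R -> x0 \in A -> exists2 x, x \in A & forall y, y \in A -> ~~ R x y.
Proof.
move=> Hac Hx0.
pose Pn := fun n => [exists x in A, #|[set y | connect R x y]| == n].
have exP : exists n, Pn n.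
  by exists #|[set y | connect R x0 y]|; apply/existsP; exists x0; rewrite Hx0 eqxx.
case: (ex_minnP exP) => m /existsP [x /andP [HxA /eqP Hm]] Hmin.
exists x => // y HyA; apply/negP => Rxy.
have Hsub : [set z | connect R y z] \proper [set z | connect R x z].
  apply/properP; split.
    apply/subsetP => z; rewrite !inE => Hyz.
    exact: connect_trans (connect1 Rxy) Hyz.
  exists x; rewrite !inE ?connect0 //.
  by apply/negP => Hyx; apply: (acyc_conn Hac Hyx Rxy).
have := proper_card Hsub; rewrite Hm => Hlt.
have : Pn #|[set z | connect R y z]| by apply/existsP; exists y; rewrite HyA eqxx.
move/Hmin; rewrite leqNgt Hlt; done.
Qed.

Lemma sorted_index (T : finType) (R : rel T) (s : seq T) u v :
  acyclic R -> sorted R s -> u \in s -> v \in s -> R u v -> index u s < index v s.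
Proof.
move=> Hac Hs Hu Hv Ruv; rewrite ltnNge; apply/negP => Hle.
have Hs' : sorted (connect R) s by apply: sub_sorted Hs => a b; apply: connect1.
have := sorted_leq_nth (@connect_trans _ R) (@connect0 _ R) u Hs'.
move=> /(_ (index v s) (index u s)); rewrite !inE !index_mem => /(_ Hv Hu Hle).
rewrite !nth_index // => Hc.
exact: acyc_conn Hac Hc Ruv.
Qed.

Lemma card_le_rel (A B : finType) (P : {set A}) (Q : {set B}) (R : A -> B -> Prop) :
  (forall a, a \in P -> exists2 b, b \in Q & R a b) ->
  (forall a a' b, a \in P -> a' \in P -> R a b -> R a' b -> a = a') -> #|P| <= #|Q|.
Proof.
move=> Htot Hinj.
have f : forall a, {ob : option B | a \in P -> exists2 b, ob = Some b & b \in Q /\ R a b}.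
  move=> a; apply: constructive_indefinite_description.
  case: (boolP (a \in P)) => Ha.
    case: (Htot a Ha) => b Hb Rab; exists (Some b) => _; exists b => //.
  by exists None.
pose g a := sval (f a).
have Hg : forall a, a \in P -> exists2 b, g a = Some b & b \in Q /\ R a b.
  by move=> a Ha; rewrite /g; case: (f a) => ob /= /(_ Ha).
have -> : #|P| = #|[set g a | a in P]|.
  rewrite card_in_imset // => a a' Ha Ha' Hgg.
  case: (Hg a Ha) => b Hb [_ Rb]; case: (Hg a' Ha') => b' Hb' [_ Rb'].
  move: Hgg; rewrite Hb Hb' => [[Ebb]]; subst b'.
  exact: Hinj Ha Ha' Rb Rb'.
rewrite -(card_imset Q (@Some_inj _)) .
apply: subset_leq_card; apply/subsetP => _ /imsetP [a Ha ->].
case: (Hg a Ha) => b -> [Hb _]; exact: imset_f.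
Qed.

Lemma build (V : finType) (E : rel V) (pi : {set {set V}}) :
  acyclic E -> trivIset pi -> (forall X, X \in pi -> has_ham_path E X) ->
  acyclic (quot_rel E pi) ->
  forall n (Q : {set {set V}}), #|Q| <= n -> Q \subset pi ->
  exists S : seq V, [/\ uniq S, forall x, (x \in S) = (x \in cover Q),
   forall u v, u \in cover Q -> v \in cover Q -> E u v -> index u S < index v S &
   forall X, X \in Q -> exists s l r,
     [/\ uniq s, [set x in s] = X, sorted E s & S = l ++ s ++ r]].
Proof.
move=> Hac Htriv Hham Hqac; elim=> [|n IH] Q.
  rewrite leqn0 => /eqP /cards0_eq -> _; exists [::]; split => //.
  - by move=> x; rewrite /cover big_set0 inE.
  - by move=> u; rewrite /cover big_set0 inE.
  - by move=> X; rewrite inE.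
move=> HQn HQpi.
case: (set_0Vmem Q) => [->|[X0 HX0]].
  exists [::]; split => //.
  - by move=> x; rewrite /cover big_set0 inE.
  - by move=> u; rewrite /cover big_set0 inE.
  - by move=> X; rewrite inE.
case: (sink_ex Hqac HX0) => X HXQ Hsink.
have HXpi : X \in pi by apply: (subsetP HQpi).
have HQ'n : #|Q :\ X| <= n.
  by move: HQn; rewrite (cardsD1 X Q) HXQ add1n ltnS.
have HQ'pi : Q :\ X \subset pi by apply: subset_trans HQpi; apply: subsetDl.
case: (IH _ HQ'n HQ'pi) => S' [HuS' HmS' HES' HbS'].
case: (Hham X HXpi) => s [Hus Hss HEs].
have HcovQ : forall x, (x \in cover Q) = (x \in X) || (x \in cover (Q :\ X)).
  by move=> x; rewrite /cover (big_setD1 X HXQ) /= inE.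
have Hdisj : forall x, x \in X -> x \in cover (Q :\ X) -> False.
  move=> x HxX /bigcupP [Y]; rewrite !inE => /andP [HYX HYQ] HxY.
  have HYpi : Y \in pi by apply: (subsetP HQpi).
  move/negP: HYX; apply.
  by rewrite -(def_pblock Htriv HYpi HxY) (def_pblock Htriv HXpi HxX).
have Hins : forall x, (x \in s) = (x \in X) by move=> x; rewrite -Hss inE.
exists (S' ++ s); split.
- rewrite cat_uniq HuS' Hus andbT /=; apply/hasPn => x; rewrite Hins => HxX.
  by rewrite HmS'; apply/negP; apply: Hdisj.
- by move=> x; rewrite mem_cat HmS' Hins HcovQ orbC.
- move=> u v; rewrite !HcovQ !index_cat !HmS' => Hu Hv Euv.
  case: (boolP (u \in X)) => HuX; case: (boolP (v \in X)) => HvX.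
  + have Hu' : u \in cover (Q :\ X) = false by apply/negP; apply: Hdisj.
    have Hv' : v \in cover (Q :\ X) = false by apply/negP; apply: Hdisj.
    rewrite Hu' Hv' ltn_add2l; apply: sorted_index Hac HEs _ _ Euv; by rewrite Hins.
  + move: Hv; rewrite (negbTE HvX) /= => Hv.
    exfalso; move/bigcupP: Hv => [Y]; rewrite !inE => /andP [HYX HYQ] HvY.
    move/negP: (Hsink Y HYQ); apply.
    rewrite /quot_rel HXpi (subsetP HQpi _ HYQ) eq_sym HYX /=.
    by apply/existsP; exists u; rewrite HuX; apply/existsP; exists v; rewrite HvY.
  + move: Hu; rewrite (negbTE HuX) /= => Hu.
    have Hv' : v \in cover (Q :\ X) = false by apply/negP; apply: Hdisj.
    rewrite Hu Hv'; apply: leq_trans (leq_addr _ _).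
    by rewrite index_mem HmS'.
  + move: Hu Hv; rewrite (negbTE HuX) (negbTE HvX) /= => Hu Hv.
    by rewrite Hu Hv; apply: HES'.
- move=> Y HYQ; case: (eqVneq Y X) => [->|HYX].
    by exists s, S', [::]; rewrite cats0.
  have HYQ' : Y \in Q :\ X by rewrite !inE HYX.
  case: (HbS' Y HYQ') => s' [l [r [H1 H2 H3 ->]]].
  by exists s', l, (r ++ s); rewrite -!catA.
Qed.

Section Count.
Variables (V : finType) (E : rel V) (rho : V -> 'I_#|V|).
Hypothesis rho_inj : injective rho.
Let Rel := fun u v => E u v && (nat_of_ord (rho v) == (rho u).+1).

Lemma prefix_sub x t1 t2 : path Rel x t1 -> path Rel x t2 -> size t1 <= size t2 ->
  {subset t1 <= t2}.
Proof.
elim: t1 x t2 => [|a t1 IH] x [|b t2] //=.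
move=> /andP [/andP [_ /eqP Ha] Hp1] /andP [/andP [_ /eqP Hb] Hp2]; rewrite ltnS => Hs.
have Eab : a = b by apply: rho_inj; apply: val_inj; rewrite /= Ha Hb.
subst b => y; rewrite !inE => /orP [->//|Hy]; rewrite (IH a t2) ?orbT //.
Qed.


Lemma head_min x t y : path Rel x t -> y \in t -> rho x < rho y.
Proof.
move=> Hp Hy.
have Hp' : path (fun u v => rho u < rho v) x t.
  by apply: sub_path Hp => u v /andP [_ /eqP ->].
have Htr : transitive (fun u v : V => rho u < rho v).
  by move=> a b c; apply: ltn_trans.
by move/allP: (order_path_min Htr Hp') => /(_ y Hy).
Qed.

Lemma same_head x t1 t2 : maximal_tauE_path E rho (x :: t1) ->
  maximal_tauE_path E rho (x :: t2) -> [set y in x :: t1] = [set y in x :: t2].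
Proof.
move=> [[_ Hp1] Hm1] [[_ Hp2] Hm2].
case: (leqP (size t1) (size t2)) => Hs.
  apply: Hm1; first by split.
  apply/subsetP => y; rewrite !inE => /orP [->//|Hy].
  by rewrite (prefix_sub Hp1 Hp2 Hs) ?orbT.
apply/esym; apply: Hm2; first by split.
apply/subsetP => y; rewrite !inE => /orP [->//|Hy].
by rewrite (prefix_sub Hp2 Hp1 (ltnW Hs)) ?orbT.
Qed.

Lemma no_pred x t p : maximal_tauE_path E rho (x :: t) -> Rel p x -> False.
Proof.
move=> [[_ Hp] Hm] Hpx.
have Ht : tauE_path E rho (p :: x :: t) by split => //=; apply/andP; split.
have := Hm _ Ht.
have Hsub : [set y in x :: t] \subset [set y in p :: x :: t].
  by apply/subsetP => y; rewrite !inE => ->; rewrite orbT.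
move=> /(_ Hsub) /setP /(_ p); rewrite !inE eqxx /= => /orP [/eqP Hpx'|Hpt].
  by subst p; move: Hpx => /andP [_ /eqP /n_Sn].
have := head_min Hp Hpt; move: Hpx => /andP [_ /eqP ->].
by rewrite ltnNge leqnSn.
Qed.

Lemma count_part (pi : {set {set V}}) :
  (forall x, exists2 X, X \in pi & x \in X) ->
  (forall X, X \in pi -> forall x x', x \in X -> x' \in X -> rho x < rho x' ->
     exists p, Rel p x') ->
  forall P : {set {set V}}, (forall A, A \in P <-> in_pi_tauE E rho A) -> #|P| <= #|pi|.
Proof.
move=> Hcov Hblk P HP.
apply: (@card_le_rel _ _ P pi (fun A X => exists x t,
   [/\ maximal_tauE_path E rho (x :: t), A = [set y in x :: t], x \in X & X \in pi])).
- move=> A /HP [[|x t] [Hm HA]]; first by case: Hm => [[]].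
  case: (Hcov x) => X HX HxX; exists X => //; by exists x, t; split.
- move=> A A' X HA HA' [x [t [Hm -> HxX HXpi]]] [x' [t' [Hm' -> Hx'X _]]].
  case: (eqVneq x x') => [Exx|Hne].
    by subst x'; apply: same_head.
  have Hr : rho x != rho x' by apply: contra Hne => /eqP /rho_inj ->.
  exfalso; case: (ltngtP (rho x) (rho x')) => Hlt.
  + by case: (Hblk X HXpi x x' HxX Hx'X Hlt) => p Hp; apply: (no_pred Hm' Hp).
  + by case: (Hblk X HXpi x' x Hx'X HxX Hlt) => p Hp; apply: (no_pred Hm Hp).
  + by move/val_inj: Hlt => Hr'; rewrite Hr' eqxx in Hr.
Qed.
End Count.

Lemma finset_of (T : finType) (Q : T -> Prop) : exists P : {set T}, forall A, A \in P <-> Q A.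
Proof.
exists [set A | if excluded_middle_informative (Q A) then true else false] => A.
by rewrite inE; case: excluded_middle_informative.
Qed.

Lemma sz (V : finType) (S : seq V) : uniq S -> (forall x, x \in S) -> size S = #|V|.
Proof. move=> Hu Hs. rewrite -(card_uniqP Hu); apply: eq_card => x; by rewrite Hs. Qed.

Lemma sorted_pred (T : eqType) (R : rel T) (s : seq T) x0 i :
  sorted R s -> 0 < i -> i < size s -> R (nth x0 s i.-1) (nth x0 s i).
Proof.
case: s => [|y s'] //= Hp; case: i => [|i] //= _; rewrite ltnS => His.
exact: (pathP x0 Hp i His).
Qed.

Theorem lemma4p1 (V : finType) (E : rel V) (pi : {set {set V}}) :
  acyclic E -> Hstar_partition E pi ->
  exists rho : V -> 'I_#|V|, topo_sort E rho /\
    exists P : {set {set V}},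
      (forall A, A \in P <-> in_pi_tauE E rho A) /\ #|P| <= #|pi|.
Proof.
move=> Hac [Hpart _ Hham Hqac].
move: Hpart => /and3P [/eqP Hcov Htriv _].
case: (build Hac Htriv Hham Hqac (leqnn #|pi|) (subxx pi)) => S [HuS HmS HES HbS].
have HS : forall x, x \in S by move=> x; rewrite HmS Hcov inE.
have Hsz := sz HuS HS.
have Hlt : forall x, index x S < #|V| by move=> x; rewrite -Hsz index_mem.
pose rho x := Ordinal (Hlt x).
have rho_inj : injective rho.
  move=> x y /(congr1 val) /= Hxy; exact: (index_inj x (HS x) (HS y) Hxy).
exists rho; split.
  split; first by apply: inj_card_bij rho_inj _; rewrite card_ord.
  by move=> u v Euv; apply: HES; rewrite // Hcov inE.
case: (finset_of (in_pi_tauE E rho)) => P HP; exists P; split => //.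
apply: (count_part rho_inj) HP.
  move=> x; have : x \in cover pi by rewrite Hcov inE.
  by move/bigcupP => [X HX HxX]; exists X.
move=> X HX x x' HxX Hx'X /=.
case: (HbS X HX) => s [l [r [Hus Hss HEs HSe]]].
have Hins : forall y, (y \in s) = (y \in X) by move=> y; rewrite -Hss inE.
have Hidx : forall y, y \in s -> index y S = size l + index y s.
  move=> y Hy; move: HuS; rewrite HSe cat_uniq => /and3P [_ Hn _].
  have Hyl : y \in l = false.
    by apply/negP => Hyl; move/hasPn: Hn => /(_ y); rewrite mem_cat Hy Hyl => /(_ erefl).
  by rewrite index_cat Hyl index_cat Hy.
rewrite (Hidx x) ?Hins // (Hidx x') ?Hins // ltn_add2l => Hlt'.
set i := index x' s in Hlt'.
have Hi : 0 < i by apply: leq_ltn_trans Hlt'.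
have His : i < size s by rewrite /i index_mem Hins.
pose p := nth x' s i.-1.
have Hps : p \in s by rewrite mem_nth // (leq_ltn_trans (leq_pred i)).
have Hpi : index p s = i.-1 by rewrite index_uniq // (leq_ltn_trans (leq_pred i)).
exists p; apply/andP; split.
  have := sorted_pred x' HEs Hi His; rewrite /i nth_index // Hins //.
rewrite /rho /=.
by rewrite (Hidx p) // Hpi -/i -addnS prednK.
Qed.
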